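(* Let $m\ge 1$ and let $G$ be the complement of the path graph $P_{2m}$, i.e., the simple graph on vertices $\{1,\dots,2m\}$ in which distinct vertices $i,j$ are adjacent if and only if $|i-j|\ge 2$. Then the number of perfect matchings of $G$ equals $$\sum_{k=0}^{m}(-1)^{m-k}\frac{(m+k)!}{k!\,(m-k)!\,2^{k}}.$$
   Context: A perfect matching of a graph on $2m$ vertices is a set of $m$ edges, no two of which share a vertex. *)

(* Defs.v *)
From HB Require Import structures.
From mathcomp Require Import all_boot all_order all_algebra.
Set Implicit Arguments. Unset Strict Implicit. Unset Printing Implicit Defensive.

(* Vertices 1..2m are represented by 'I_(2m) = {0,...,2m-1} (shift by one,
   which does not affect |i - j|). *)

Definition compl_path_adj (n : nat) : rel 'I_n :=
  fun i j => (i.+2 <= j) || (j.+2 <= i).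

Definition perfect_matching (n : nat) (adj : rel 'I_n) (M : {set {set 'I_n}}) : bool :=
  [forall e in M, exists i, exists j, adj i j && (e == [set i; j])] &&
  [forall v, #|[set e in M | v \in e]| == 1].

(* Main.v *)
Require Import Defs.
From HB Require Import structures.
From mathcomp Require Import all_boot all_order all_algebra.
From mathcomp Require Import zify ring lra.
Set Implicit Arguments. Unset Strict Implicit. Unset Printing Implicit Defensive.
Import GRing.Theory Num.Theory.
Fixpoint df (k : nat) : nat := match k with 0 => 1 | 1 => 0 | k'.+2 => k'.+1 * df k' end.

Section PM.
Variables (T : finType) (r : rel T).
Hypotheses (rsym : symmetric r) (rirr : irreflexive r).

Definition pmb (V : {set T}) (M : {set {set T}}) : bool :=
  [forall e in M, exists i, exists j, [&& i \in V, j \in V, r i j & e == [set i; j]]] &&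
  [forall v in V, #|[set e in M | v \in e]| == 1].
Definition pms V := [set M | pmb V M].
Definition NN V := #|pms V|.

Lemma pmbP (V : {set T}) (M : {set {set T}}) : reflect
  ((forall e, e \in M -> exists i j, [/\ i \in V, j \in V, r i j & e = [set i; j]]) /\
   (forall v, v \in V -> #|[set e in M | v \in e]| = 1)) (pmb V M).
Proof.
apply: (iffP andP) => [[/forall_inP H1 /forall_inP H2]|[H1 H2]]; split.
- move=> e /H1 /existsP [i /existsP [j /and4P [? ? ? /eqP ?]]]; by exists i, j.
- by move=> v /H2 /eqP.
- apply/forall_inP => e /H1 [i [j [? ? ? ?]]]; apply/existsP; exists i; apply/existsP; exists j.
  by apply/and4P; split => //; apply/eqP.
- by apply/forall_inP => v /H2 ->.
Qed.

Lemma edge_sub (V : {set T}) M e : pmb V M -> e \in M -> e \subset V.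
Proof.
move=> /pmbP [H1 _] /H1 [i [j [iV jV _ ->]]].
by apply/subsetP => z; rewrite !inE => /orP [] /eqP ->.
Qed.

Lemma uniq_edge (V : {set T}) M v e1 e2 : pmb V M -> v \in V -> e1 \in M -> e2 \in M ->
  v \in e1 -> v \in e2 -> e1 = e2.
Proof.
move=> /pmbP [_ H2] vV e1M e2M v1 v2.
have /eqP/cards1P [w Hw] := H2 v vV.
have : e1 \in [set e in M | v \in e] by rewrite inE e1M v1.
have : e2 \in [set e in M | v \in e] by rewrite inE e2M v2.
by rewrite Hw !inE => /eqP -> /eqP ->.
Qed.

Lemma part (V : {set T}) x y : x \in V -> y \in V -> r x y ->
  #|[set M in pms V | [set x; y] \in M]| = NN (V :\ x :\ y).
Proof.
move=> xV yV rxy.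
have xny : x != y by apply: contraTneq rxy => ->; rewrite rirr.
set V' := V :\ x :\ y.
have xV' : x \notin V' by rewrite !inE eqxx andbF.
have yV' : y \notin V' by rewrite !inE eqxx.
have nin : forall M', M' \in pms V' -> [set x; y] \notin M'.
  move=> M'; rewrite inE => HM; apply/negP => /(edge_sub HM) /subsetP /(_ x).
  by rewrite !inE !eqxx /= andbF => /(_ isT).
rewrite /NN -(@card_in_imset _ _ (fun M' => [set x; y] |: M') (pms V')); last first.
  move=> M1 M2 H1 H2 /= E.
  by rewrite -(setU1K (nin _ H1)) -(setU1K (nin _ H2)) E.
suff -> : [set M in pms V | [set x; y] \in M] = [set [set x; y] |: M' | M' in pms V'] by [].
apply/setP => M; rewrite !inE; apply/andP/imsetP.
- move=> [HM xyM]; exists (M :\ [set x; y]); last by rewrite setD1K.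
  rewrite inE; apply/pmbP; move/pmbP: (HM) => [H1 H2]; split.
  + move=> e; rewrite !inE => /andP [ne eM].
    have [i [j [iV jV rij Ee]]] := H1 e eM.
    have nx : forall z, z \in e -> z != x.
      move=> z ze; apply: contra_neq ne => zx; subst z.
      by apply: (uniq_edge HM xV eM xyM ze); rewrite !inE eqxx.
    have ny : forall z, z \in e -> z != y.
      move=> z ze; apply: contra_neq ne => zx; subst z.
      by apply: (uniq_edge HM yV eM xyM ze); rewrite !inE eqxx orbT.
    exists i, j; split => //.
    + by rewrite !inE iV ny ?nx // Ee !inE eqxx ?orbT.
    + by rewrite !inE jV ny ?nx // Ee !inE eqxx ?orbT.
  + move=> v; rewrite !inE => /and3P [vy vx vV]; rewrite -(H2 v vV); apply: eq_card => e; rewrite !inE; case ve: (v \in e); rewrite ?andbF ?andbT //.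
    case: eqP => // Ee; move: ve; rewrite Ee !inE (negbTE vx) (negbTE vy).
    done.
- move=> [M' HM' ->]; rewrite !inE eqxx /=.
  move: HM'; rewrite inE => HM'; move/pmbP: (HM') => [H1 H2].
  split => //; apply/pmbP; split.
  + move=> e; rewrite !inE => /orP [/eqP ->|eM']; first by exists x, y.
    have [i [j [iV jV rij Ee]]] := H1 e eM'.
    exists i, j; split => //; [move: iV | move: jV]; rewrite !inE; by case/and3P.
  + move=> v vV.
    have noe : forall e, e \in M' -> v \in e -> v \in V'.
      by move=> e eM ve; move/subsetP: (edge_sub HM' eM) => /(_ v ve).
    case vxy: (v \in [set x; y]).
      have -> : [set e in [set x; y] |: M' | v \in e] = [set [set x; y]].
        apply/setP => e; rewrite !inE; apply/andP/eqP => [[/orP [/eqP //|eM] ve]|->].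
        move: (noe e eM ve) vxy; rewrite !inE => /and3P [vny vnx _].
        by rewrite (negbTE vny) (negbTE vnx).
        by rewrite eqxx vxy.
      by rewrite cards1.
    have vV' : v \in V'.
      by move: vxy; rewrite !inE vV; case: (v == x); case: (v == y).
    rewrite -(H2 v vV'); apply: eq_card => e; rewrite !inE.
    by case: (e =P [set x; y]) => [->|]; rewrite ?vxy ?andbF.
Qed.

Lemma expansion (V : {set T}) x : x \in V ->
  NN V = \sum_(y | (y \in V) && r x y) NN (V :\ x :\ y).
Proof.
move=> xV.
have E : forall y, (y \in V) && r x y ->
    NN (V :\ x :\ y) = \sum_(M in pms V) nat_of_bool ([set x; y] \in M).
  move=> y /andP [yV rxy]; rewrite -part //.
  rewrite -sum1_card big_mkcond /= [RHS]big_mkcond /=; apply: eq_bigr => M _; rewrite inE.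
  by case: (M \in pms V); case: ([set x; y] \in M).
rewrite (eq_bigr _ E).
rewrite exchange_big /= /NN -sum1_card; apply: eq_bigr => M.
rewrite inE => HM; move/pmbP: (HM) => [H1 H2].
have /eqP/cards1P [e0 He0] := H2 x xV.
have : e0 \in [set e in M | x \in e] by rewrite He0 set11.
rewrite inE => /andP [e0M xe0].
have [i [j [iV jV rij Ee]]] := H1 e0 e0M.
have [y0 [y0V rxy0 E0]] : exists y0, [/\ y0 \in V, r x y0 & e0 = [set x; y0]].
  move: xe0; rewrite Ee !inE => /orP [] /eqP ?; subst x.
  - by exists j.
  - by exists i; rewrite rsym setUC.
rewrite (bigD1 y0) ?y0V ?rxy0 //= -E0 e0M big1 // => y /andP [/andP [yV rxy] yn].
case yM: ([set x; y] \in M) => //.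
have := uniq_edge HM xV yM e0M; rewrite !inE eqxx xe0 => /(_ isT isT) E1.
have : y \in [set x; y] by rewrite !inE eqxx orbT.
rewrite E1 E0 !inE (negbTE yn) orbF => /eqP yx; subst y.
by rewrite rirr in rxy.
Qed.

End PM.

Lemma pms_ext (T : finType) (r1 r2 : rel T) (V : {set T}) :
  (forall i j, i \in V -> j \in V -> r1 i j = r2 i j) -> pms r1 V = pms r2 V.
Proof.
move=> H; apply/setP => M; rewrite !inE.
apply/pmbP/pmbP => [][H1 H2]; split => // e /H1 [i [j [iV jV rij Ee]]];
  exists i, j; split => //; by rewrite ?H // -H.
Qed.

Lemma dc (T : finType) (r r' : rel T) (V : {set T}) a b :
  symmetric r -> irreflexive r -> symmetric r' -> irreflexive r' ->
  a \in V -> b \in V -> ~~ r a b ->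
  (forall i j, i \in V -> j \in V ->
     r' i j = [|| r i j, (i == a) && (j == b) | (i == b) && (j == a)]) ->
  NN r' V = NN r V + NN r (V :\ a :\ b).
Proof.
move=> rs ri rs' ri' aV bV nab H.
have r'ab : r' a b by rewrite H // !eqxx orbT.
have anb : a != b by apply: contraTneq r'ab => ->; rewrite ri'.
rewrite (expansion rs' ri' aV) (bigD1 b) ?bV ?r'ab //= addnC.
rewrite /NN (pms_ext (r2 := r)); last first.
  move=> i j; rewrite !inE => /and3P [_ ia iV] /and3P [_ ja jV].
  by rewrite H // (negbTE ia) (negbTE ja) !andbF !orbF.
congr (_ + _); have := expansion rs ri aV; rewrite /NN => ->; apply: eq_big.
- move=> y; case yV: (y \in V) => //=; rewrite H // eqxx (negbTE anb) /=.
  by case: (y =P b) => [->|_]; rewrite ?(negbTE nab) ?andbT ?andbF ?orbF.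
- move=> y _; rewrite /NN (pms_ext (r2 := r)) //.
  move=> i j; rewrite !inE => /and3P [_ ia iV] /and3P [_ ja jV].
  by rewrite H // (negbTE ia) (negbTE ja) !andbF !orbF.
Qed.

Lemma NN_set0 (T : finType) (r : rel T) : NN r set0 = 1.
Proof.
apply/eqP/cards1P; exists set0; apply/setP => M; rewrite !inE.
apply/idP/idP.
- move=> /pmbP [H1 _]; apply/eqP/setP => e; rewrite inE.
  apply/negP => /H1 [i [j [] ]]; by rewrite inE.
- move/eqP => ->; apply/pmbP; split => [e|v]; by rewrite inE.
Qed.

Lemma Kcount (T : finType) (V : {set T}) : NN (fun i j : T => i != j) V = df #|V|.
Proof.
have rs : symmetric (fun i j : T => i != j) by move=> i j; rewrite eq_sym.
have ri : irreflexive (fun i j : T => i != j) by move=> i; rewrite eqxx.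
have [k HV] : exists k, #|V| = k by eexists. rewrite HV.
elim/ltn_ind: k V HV => k IH V HV.
case: (set_0Vmem V) => [E|[x xV]].
  by move: HV; rewrite E cards0 => <-; rewrite NN_set0.
rewrite (expansion rs ri xV).
have HV1 : #|V :\ x| = k.-1 by move: HV; rewrite (cardsD1 x) xV; lia.
have E : forall y, (y \in V) && (x != y) -> NN (fun i j : T => i != j) (V :\ x :\ y) = df k.-2.
  move=> y /andP [yV xy]; apply: IH; last first.
    by move: HV1; rewrite (cardsD1 y) !inE yV eq_sym xy; lia.
  by move: HV1; rewrite (cardsD1 y) !inE yV eq_sym xy; lia.
rewrite (eq_bigr _ E) sum_nat_const.
have -> : #|[pred y | (y \in V) && (x != y)]| = k.-1.
  by rewrite -HV1; apply: eq_card => y; rewrite !inE eq_sym andbC.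
have : (0 < k)%N by rewrite -HV; apply/card_gt0P; exists x.
by case: k {IH HV E HV1} => [|[|k]].
Qed.
Lemma df_fact j : df (2 * j) * (j`! * 2 ^ j) = (2 * j)`!.
Proof.
elim: j => [//|j IH].
rewrite (_ : 2 * j.+1 = (2*j).+2); last lia.
rewrite /= !factS expnS -IH. ring.
Qed.
Lemma binj m j : j <= m -> 'C(m + j, m - j) * df (2 * j) * (j`! * (m - j)`! * 2 ^ j) = (m + j)`!.
Proof.
move=> jm.
have := bin_fact (_ : m - j <= m + j); rewrite (_ : m + j - (m - j) = 2 * j); last lia.
rewrite -df_fact => <-; last lia. ring.
Qed.

Section Conc.
Variable n : nat.
Definition allowed (t : nat) : rel 'I_n := fun i j =>
  (val i != val j) && ~~ [&& t <= i, t <= j & (i.+1 == j) || (j.+1 == i)].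
Definition Vt (A : {set 'I_n}) t := A :|: [set i : 'I_n | t <= i].

Lemma allowed_sym t : symmetric (allowed t).
Proof. move=> i j; rewrite /allowed; lia. Qed.
Lemma allowed_irr t : irreflexive (allowed t).
Proof. move=> i; rewrite /allowed; lia. Qed.

Lemma base_case t A : (n <= t.+1)%N -> NN (allowed t) (Vt A t) = NN (fun i j => i != j) (Vt A t).
Proof.
move=> h; rewrite /NN (pms_ext (r2 := fun i j => i != j)) // => i j _ _.
rewrite /allowed -val_eqE /=. have := ltn_ord i; have := ltn_ord j. lia.
Qed.
End Conc.

Local Open Scope ring_scope.

Definition cc (p q k : nat) : rat := (-1) ^+ k * ('C(p - k, k) * df (p + q - 2 * k))%:R.
Definition S p q := \sum_(k < p.+1) cc p q k.

Lemma cc0 p q k : (p < 2 * k)%N -> cc p q k = 0.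
Proof. by move=> h; rewrite /cc bin_small ?mul0n ?mulr0 //; lia. Qed.

Lemma S_ext p q N : (p < N)%N -> \sum_(k < N) cc p q k = S p q.
Proof.
move=> pN; rewrite /S -!(big_mkord xpredT) (big_cat_nat _ (n := p.+1)) //=.
rewrite [X in _ + X = _]big_nat_cond [X in _ + X = _]big1 ?addr0 // => k /andP [/andP [h1 h2] _].
by apply: cc0; lia.
Qed.

Lemma S_rec p q : S p.+2 q = S p.+1 q.+1 - S p q.
Proof.
rewrite -(@S_ext p.+1 q.+1 p.+3) // -(@S_ext p q p.+2) //.
rewrite /S big_ord_recl [X in _ = X - _]big_ord_recl.
rewrite -addrA; congr (_ + _); first by rewrite /cc !bin0 (_ : (p.+2 + q - 2*0 = p.+1 + q.+1 - 2*0)%N) //; lia.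
rewrite -sumrB; apply: eq_bigr => k _; rewrite /cc /= (_ : bump 0 k = k.+1) // exprS.
have -> : (p.+2 + q - 2 * k.+1 = p + q - 2 * k)%N by lia.
have -> : (p.+1 + q.+1 - 2 * k.+1 = p + q - 2 * k)%N by lia.
case: (leqP k p) => kp.
- have -> : (p.+2 - k.+1 = (p - k).+1)%N by lia.
  have -> : (p.+1 - k.+1 = p - k)%N by lia.
  rewrite binS mulnDl natrD. ring.
- rewrite !bin_small; try lia. rewrite !mul0n. ring.
Qed.

Lemma S0 q : S 0 q = (df q)%:R.
Proof. by rewrite /S big_ord1 /cc /= expr0 mul1r bin0 mul1n add0n muln0 subn0. Qed.
Lemma S1 q : S 1 q = (df q.+1)%:R.
Proof. by rewrite /S big_ord_recr big_ord1 /= /cc expr0 mul1r bin0 mul1n bin_small // mul0n mulr0 addr0 muln0 subn0 add1n. Qed.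

Section G.
Variable n : nat.
Lemma Grec p : forall t (A : {set 'I_n}), (t + p = n)%N -> A \subset [set i : 'I_n | (i < t)%N] ->
  (NN (allowed t) (Vt A t))%:R = S p #|A| :> rat.
Proof.
elim/ltn_ind: p => p IH t A htp hA.
have Adis : forall i, i \in A -> (i < t)%N by move=> i /(subsetP hA); rewrite inE.
case: p IH htp => [|[|p]] IH htp.
- rewrite base_case; last lia. rewrite Kcount S0.
  suff -> : Vt A t = A by [].
  apply/setP => i; rewrite !inE; have := ltn_ord i; case: (i \in A) => //=; lia.
- rewrite base_case; last lia. rewrite Kcount S1.
  have ht : (t < n)%N by lia.
  suff -> : Vt A t = Ordinal ht |: A.
    rewrite cardsU1; case: (boolP (Ordinal ht \in A)) => [/Adis /=|]; [lia|done].
  apply/setP => i; rewrite !inE -val_eqE /=; have := ltn_ord i.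
  case iA: (i \in A); [have := Adis i iA|]; rewrite /=; lia.
- have ha : (t < n)%N by lia.
  have hb : (t.+1 < n)%N by lia.
  set a := Ordinal ha; set b := Ordinal hb.
  have aV : a \in Vt A t by rewrite !inE leqnn orbT.
  have bV : b \in Vt A t by rewrite !inE /= leqnSn orbT.
  have nab : ~~ allowed t a b by rewrite /allowed /=; lia.
  have H : forall i j, i \in Vt A t -> j \in Vt A t ->
     allowed t.+1 i j = [|| allowed t i j, (i == a) && (j == b) | (i == b) && (j == a)].
    by move=> i j _ _; rewrite /allowed -!val_eqE /=; lia.
  have := dc (allowed_sym t) (allowed_irr t) (allowed_sym t.+1) (allowed_irr t.+1) aV bV nab H.
  have -> : Vt A t = Vt (a |: A) t.+1.
    apply/setP => i; rewrite !inE -val_eqE /=.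
    case iA: (i \in A); [have := Adis i iA|]; rewrite /= ?orbT //; lia.
  have -> : Vt (a |: A) t.+1 :\ a :\ b = Vt A t.+2.
    apply/setP => i; rewrite !inE -!val_eqE /=.
    case iA: (i \in A); [have := Adis i iA|]; rewrite /= ?orbT ?andbT; lia.
  have -> : NN (allowed t) (Vt A t.+2) = NN (allowed t.+2) (Vt A t.+2).
    rewrite /NN (pms_ext (r2 := allowed t.+2)) // => i j.
    rewrite !inE; case iA: (i \in A); [have := Adis i iA|];
    case jA: (j \in A); try have := Adis j jA; rewrite /allowed /=; lia.
  move=> Hdc.
  have E1 := IH p.+1 (ltnSn _) t.+1 (a |: A).
  have E2 := IH p (leqW (ltnSn _)) t.+2 A.
  rewrite S_rec -E2; try lia; last first.
    apply/subsetP => i /Adis; rewrite inE; lia.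
  have <- : #|a |: A| = #|A|.+1.
    rewrite cardsU1; case: (boolP (a \in A)) => [/Adis /=|]; [lia|done].
  rewrite -E1; try lia; last first.
    apply/subsetP => i; rewrite !inE -val_eqE /= => /orP [/eqP ->|/Adis]; lia.
  by rewrite Hdc natrD addrK.
Qed.
End G.

Lemma final_sum m :
  S (2 * m) 0 = \sum_(0 <= k < m.+1)
      (-1) ^+ (m - k)%N * ((m + k)`!)%:R / ((k`! * (m - k)`! * 2 ^ k)%N)%:R :> rat.
Proof.
rewrite /S -(big_mkord xpredT) (big_cat_nat _ (n := m.+1)) //=; last lia.
rewrite [X in _ + X]big_nat_cond [X in _ + X]big1 ?addr0; last first.
  by move=> k /andP [/andP [h1 h2] _]; apply: cc0; lia.
rewrite [RHS]big_nat_rev /=; apply: eq_big_nat => k /andP [_ hk].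
rewrite add0n subSS.
have hj : (m - k <= m)%N by lia.
have := binj hj.
rewrite (_ : (m - (m - k) = k)%N); last lia.
rewrite (_ : (m + (m - k) = 2 * m - k)%N); last lia.
rewrite (_ : (2 * (m - k) = 2 * m + 0 - 2 * k)%N); last lia.
move=> <-; rewrite /cc [in RHS]natrM -mulrA mulfK //.
rewrite pnatr_eq0 -!lt0n !muln_gt0 !fact_gt0 expn_gt0 //.
Qed.

Theorem mainTheorem5 (m : nat) (hm : (1 <= m)%N) :
  (#|[set M : {set {set 'I_(2 * m)}} |
       @perfect_matching (2 * m)%N (@compl_path_adj (2 * m)%N) M]|)%:R
  = \sum_(0 <= k < m.+1)
      (-1) ^+ (m - k)%N * ((m + k)`!)%:R / ((k`! * (m - k)`! * 2 ^ k)%N)%:R :> rat.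
Proof.
rewrite -final_sum.
have E : [set M : {set {set 'I_(2 * m)}} |
       @perfect_matching (2 * m)%N (@compl_path_adj (2 * m)%N) M]
       = pms (allowed 0) (Vt set0 0).
  have -> : Vt set0 0 = [set: 'I_(2 * m)] by apply/setP => i; rewrite !inE.
  rewrite -(pms_ext (r1 := compl_path_adj (n := 2 * m))); last first.
    by move=> i j _ _; rewrite /compl_path_adj /allowed /=; lia.
  apply/setP => M; rewrite !inE /perfect_matching /pmb; congr (_ && _).
  - apply: eq_forallb_in => e _; apply: eq_existsb => i; apply: eq_existsb => j.
    by rewrite !in_setT.
  - by apply: eq_forallb => v; rewrite in_setT.
rewrite E -/(NN _ _) (Grec (p := 2 * m)) ?cards0 //.
Qed.
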